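(* Let $R$ be a ring, $n \in \mathbb{N}$, and $S_1,\dots,S_n$ sets with $|S_i| \geq \aleph_{i-1}$ for each $i$. For each $i \in [n]$ let \[v_i: \prod_{j \in [n]\setminus\{i\}} S_j \to \mathrm{Hom}^{\mathrm{fin}}_{\mathrm{Set}}\Big(\prod_{j \in [n]} S_j, R\Big)\] be an arbitrary map of sets. Then there exists $s \in \prod_{j \in [n]} S_j$ such that $v_i(p^n_i(s))(s) = 0$ for every $i \in [n]$.
   Context: $[n]=\{1,\dots,n\}$. For a set $T$ and ring $R$, $\mathrm{Hom}^{\mathrm{fin}}_{\mathrm{Set}}(T,R)$ is the set of functions $T \to R$ that vanish outside a finite subset of $T$. For $s = (s_1,\dots,s_n) \in \prod_{j \in [n]} S_j$, $p^n_i(s) = (s_1,\dots,s_{i-1},s_{i+1},\dots,s_n) \in \prod_{j \neq i} S_j$ is the point with the $i$-th coordinate omitted. *)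

(* Defs.v *)
From HB Require Import structures.
From mathcomp Require Import all_boot all_algebra.
From Stdlib Require Import List Wellfounded.

Set Implicit Arguments.
Unset Strict Implicit.
Unset Printing Implicit Defensive.

Definition well_order (T : Type) (lt : T -> T -> Prop) : Prop :=
  (forall x y z, lt x y -> lt y z -> lt x z) /\
  (forall x y, x = y \/ lt x y \/ lt y x) /\
  well_founded lt.

Definition card_le (A B : Type) : Prop :=
  exists f : A -> B, forall x y, f x = f y -> x = y.

(* is_aleph k T : T has cardinality exactly aleph_k.
   aleph_0 : T is in bijection with nat.
   aleph_(k+1) : T carries a well-order whose proper initial segments all have
   cardinality <= aleph_k while T itself does not (i.e. T has order type
   omega_(k+1), the least ordinal of cardinality > aleph_k). *)
Fixpoint is_aleph (k : nat) (T : Type) : Prop :=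
  match k with
  | 0 => exists f : nat -> T,
           (forall x y, f x = f y -> x = y) /\ (forall t, exists m, f m = t)
  | k'.+1 => exists lt : T -> T -> Prop,
      well_order lt /\
      (forall t : T, exists U : Type, is_aleph k' U /\ card_le {x : T | lt x t} U) /\
      ~ (exists U : Type, is_aleph k' U /\ card_le T U)
  end.

Definition ge_aleph (k : nat) (S : Type) : Prop :=
  exists U : Type, is_aleph k U /\ card_le U S.

Definition prodS (n : nat) (S : 'I_n -> Type) : Type := forall j : 'I_n, S j.

Definition prodS_omit (n : nat) (S : 'I_n -> Type) (i : 'I_n) : Type :=
  forall j : {j : 'I_n | j != i}, S (val j).

Definition proj_omit (n : nat) (S : 'I_n -> Type) (i : 'I_n) (s : prodS S) :
  prodS_omit S i := fun j => s (val j).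

(* f : T -> R vanishes outside a finite subset of T (element of Hom^fin(T,R)). *)
Definition fin_supp (T : Type) (R : pzRingType) (f : T -> R) : Prop :=
  exists l : list T, forall t, f t <> 0%R -> In t l.

(* Main.v *)
Require Import Defs.
From mathcomp Require Import all_boot all_algebra.
From Stdlib Require Import List Wellfounded Wf_nat ClassicalEpsilon Classical FunctionalExtensionality ProofIrrelevance Lia.
From mathcomp Require Import zify.

Set Implicit Arguments.
Unset Strict Implicit.
Unset Printing Implicit Defensive.

Definition cid' := constructive_indefinite_description.

Lemma cle_refl (A : Type) : card_le A A.
Proof. by exists id. Qed.

Lemma cle_trans (A B C : Type) : card_le A B -> card_le B C -> card_le A C.
Proof.
move=> [f hf] [g hg]; exists (fun x => g (f x)) => x y /hg /hf; done.
Qed.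

Lemma cle_prod (A B A' B' : Type) : card_le A A' -> card_le B B' -> card_le (A*B) (A'*B').
Proof.
move=> [f hf] [g hg]; exists (fun p => (f p.1, g p.2)) => [[x1 x2] [y1 y2]] [] /hf -> /hg ->; done.
Qed.

Lemma nat2 : card_le (nat*nat) nat.
Proof. exists (fun p : nat * nat => pickle p); exact: pcan_inj pickleK. Qed.

Lemma aleph0_inv (V : Type) : is_aleph 0 V -> card_le V nat /\ card_le nat V.
Proof.
move=> [f [hf hs]]; split; last by exists f.
exists (fun t => proj1_sig (cid' (hs t))) => x y e.
rewrite -(proj2_sig (cid' (hs x))) -(proj2_sig (cid' (hs y))) e; done.
Qed.

Lemma aleph0_inh (V : Type) : is_aleph 0 V -> V.
Proof. by case/aleph0_inv=> _ /cid' [f _]; exact: f 0. Qed.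

Definition Good k :=
  (forall V : Type, is_aleph k V -> card_le (V*V) V) /\
  (forall U V : Type, is_aleph k U -> is_aleph k V -> card_le U V) /\
  (forall V : Type, is_aleph k V -> V -> card_le nat V).

Lemma good0 : Good 0.
Proof.
split; [|split].
- move=> V /aleph0_inv [h1 h2].
  apply: cle_trans (cle_prod h1 h1) _; apply: cle_trans nat2 h2.
- move=> U V /aleph0_inv [h1 _] /aleph0_inv [_ h2]; exact: cle_trans h1 h2.
- by move=> V /aleph0_inv [].
Qed.

Lemma irrefl_wf (T : Type) (r : T -> T -> Prop) : well_founded r -> forall x, ~ r x x.
Proof. intros wf x. induction (wf x) as [z _ IH]. intro hz. exact (IH z hz hz). Qed.

Definition inj_on (T W : Type) (P : T -> Prop) (h : T -> W) :=
  forall x y, P x -> P y -> h x = h y -> x = y.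

Lemma inj_on_sub (T W : Type) (P : T -> Prop) : card_le {x | P x} W -> W ->
  exists h : T -> W, inj_on P h.
Proof.
move=> [f hf] w0.
exists (fun x => match excluded_middle_informative (P x) with
                 | left p => f (exist _ x p) | right _ => w0 end).
move=> x y px py.
case: (excluded_middle_informative (P x)) => [p|//].
case: (excluded_middle_informative (P y)) => [q|//].
by move=> /hf [].
Qed.

Lemma inj_on_add1 (T W : Type) (P : T -> Prop) (m : T) (a b : W) :
  a <> b -> card_le (W*W) W -> (exists h : T -> W, inj_on P h) ->
  exists h : T -> W, inj_on (fun x => x = m \/ P x) h.
Proof.
move=> ab [pw hpw] [h hh].
exists (fun x => pw (if excluded_middle_informative (x = m) then (a, a) else (b, h x))).
move=> x y px py /hpw.
case: (excluded_middle_informative (x = m)) => [xe|xm];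
case: (excluded_middle_informative (y = m)) => [ye|ym] //.
- by move=> _; rewrite xe ye.
- by case=> e; case: ab.
- by case=> e; case: ab.
- case=> e; apply: hh e; [by case: px | by case: py].
Qed.

Lemma two_elems (W : Type) : card_le nat W -> exists a b : W, a <> b.
Proof. by move=> [f hf]; exists (f 0), (f 1) => /hf. Qed.

Lemma seg1 k (G : Good k) (W : Type) (hW : is_aleph k W) (w0 : W) (T : Type)
  (r : T -> T -> Prop)
  (seg : forall t, exists U, is_aleph k U /\ card_le {x | r x t} U) (t : T) :
  exists h : T -> W, inj_on (fun x => x = t \/ r x t) h.
Proof.
case: G => [Gp [GE Gn]].
have [a [b ab]] := two_elems (Gn W hW w0).
apply: inj_on_add1 ab (Gp W hW) _.
case: (seg t) => U [hU hs].
apply: inj_on_sub w0; exact: cle_trans hs (GE U W hU hW).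
Qed.

Lemma bound k (G : Good k) (W : Type) (hW : is_aleph k W) (w0 : W) (T : Type)
  (r : T -> T -> Prop) (wo : well_order r)
  (seg : forall t, exists U, is_aleph k U /\ card_le {x | r x t} U)
  (big : ~ (exists U, is_aleph k U /\ card_le T U))
  (D : Type) (hD : card_le D W) (g : D -> T) : exists t, forall d, r (g d) t.
Proof.
apply: NNPP => H.
have H' : forall t, exists d, ~ r (g d) t.
  move=> t; apply: NNPP => H2; apply: H; exists t => d.
  by apply: NNPP => H3; apply: H2; exists d.
pose dt t := proj1_sig (cid' (H' t)).
have hdt t : ~ r (g (dt t)) t := proj2_sig (cid' (H' t)).
have Hh : forall d, exists h : T -> W, inj_on (fun x => x = g d \/ r x (g d)) h.
  move=> d; exact: (@seg1 k G W hW w0 T r seg (g d)).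
pose hd d := proj1_sig (cid' (Hh d)).
have hhd d : inj_on (fun x => x = g d \/ r x (g d)) (hd d) := proj2_sig (cid' (Hh d)).
case: wo => [_ [tot _]].
have dom t : t = g (dt t) \/ r t (g (dt t)).
  case: (tot t (g (dt t))) => [e|[h|h]]; [by left|by right|by case: (hdt t)].
case: hD => [iota hiota].
apply: big; exists W; split => //.
apply: cle_trans (proj1 G W hW).
exists (fun t => (iota (dt t), hd (dt t) t)) => x y [] /hiota e.
rewrite e => hh; apply: (hhd (dt y)) hh; last exact: dom.
rewrite -e; exact: dom.
Qed.

Lemma embed k (G : Good k) (W : Type) (hW : is_aleph k W) (w0 : W) (T : Type)
  (r : T -> T -> Prop) (wo : well_order r)
  (seg : forall t, exists U, is_aleph k U /\ card_le {x | r x t} U)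
  (big : ~ (exists U, is_aleph k U /\ card_le T U))
  (X : Type) (R : X -> X -> Prop) (wfR : well_founded R)
  (totR : forall x y, x = y \/ R x y \/ R y x)
  (segX : forall x, card_le {y | R y x} W) : card_le X T.
Proof.
pose pick := fun x (g : {y | R y x} -> T) =>
  proj1_sig (cid' (bound G hW w0 wo seg big (segX x) g)).
have hpick x g : forall d, r (g d) (pick x g).
  exact: (proj2_sig (cid' (bound G hW w0 wo seg big (segX x) g))).
pose F := fun x (rec : forall y, R y x -> T) =>
  pick x (fun y : {y | R y x} => rec (proj1_sig y) (proj2_sig y)).
pose f := Fix wfR (fun _ => T) F.
have feq x : f x = F x (fun y _ => f y).
  apply: Fix_eq => z f1 f2 hf; rewrite /F; f_equal.
  by apply: functional_extensionality => y; apply: hf.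
have mono x y : R y x -> r (f y) (f x).
  move=> h; rewrite (feq x) /F; exact: (hpick x _ (exist _ y h)).
have irr := irrefl_wf (proj2 (proj2 wo)).
exists f => x y e.
case: (totR x y) => [//|[h|h]]; have := mono _ _ h; rewrite e => /irr [].
Qed.

Definition lexR (A B : Type) (ra : A -> A -> Prop) (rb : B -> B -> Prop) (p q : A * B) :=
  ra p.1 q.1 \/ (p.1 = q.1 /\ rb p.2 q.2).

Lemma wf_lexR (A B : Type) (ra : A -> A -> Prop) (rb : B -> B -> Prop) :
  well_founded ra -> well_founded rb -> well_founded (lexR ra rb).
Proof.
intros wa wb [a b]. revert b. induction (wa a) as [a _ IHa]. intros b.
induction (wb b) as [b _ IHb]. constructor. intros [a' b'] [h|[e h]]; simpl in *.
- apply IHa; auto.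
- subst a'. apply IHb; auto.
Qed.

Lemma sig_eq (A : Type) (P : A -> Prop) (u v : {x | P x}) :
  proj1_sig u = proj1_sig v -> u = v.
Proof.
case: u v => [x p] [y q] /= e; subst y; f_equal; apply: proof_irrelevance.
Qed.

Lemma nat_seg (W : Type) (m : nat) : card_le nat W -> card_le {j : nat | (j < m)%coq_nat} W.
Proof.
move=> h; apply: cle_trans h; exists (@proj1_sig _ _) => x y; exact: sig_eq.
Qed.

Lemma nat_tot : forall x y : nat, x = y \/ (x < y)%coq_nat \/ (y < x)%coq_nat.
Proof. move=> x y; lia. Qed.

Lemma good_nat k (G : Good k) (W : Type) (hW : is_aleph k W) (w0 : W) (T : Type) :
  is_aleph k.+1 T -> card_le nat T.
Proof.
move=> [r [wo [seg big]]].
apply: (embed G hW w0 wo seg big lt_wf nat_tot) => x.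
apply: nat_seg; exact: (proj2 (proj2 G) W hW w0).
Qed.

Lemma good_succ k (G : Good k) (W : Type) (hW : is_aleph k W) (w0 : W) : Good k.+1.
Proof.
split; [|split].
- move=> V hV; have hV' := hV; case: hV' => [r [wo [seg big]]].
  have wo' := wo; case: wo' => [trans [tot wf]].
  pose mx (a b : V) := if excluded_middle_informative (r a b) then b else a.
  pose le (x y : V) := x = y \/ r x y.
  have le_trans x y z : le x y -> le y z -> le x z.
    move=> [->|h1] [<-|h2]; rewrite /le; auto; right; exact: trans h1 h2.
  have mx1 a b : le a (mx a b).
    rewrite /mx; case: (excluded_middle_informative (r a b)) => h /=; rewrite /le; auto.
  have mx2 a b : le b (mx a b).
    rewrite /mx; case: (excluded_middle_informative (r a b)) => h /=; rewrite /le; [by left|].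
    case: (tot a b) => [e|[h2|h2]]; [by left; rewrite e | by case: h | by right].
  pose key (p : V * V) := (mx p.1 p.2, p).
  pose R (p q : V * V) := lexR r (lexR r r) (key p) (key q).
  have wfR : well_founded R.
    exact: (wf_inverse_image _ _ _ key (wf_lexR wf (wf_lexR wf wf))).
  have totR p q : p = q \/ R p q \/ R q p.
    rewrite /R /lexR /=.
    case: (tot (mx p.1 p.2) (mx q.1 q.2)) => [e|[h|h]]; [|by right; left; left|by right; right; left].
    case: (tot p.1 q.1) => [e1|[h|h]]; [|by right; left; right; split; [|left]|by right; right; right; split; [rewrite e|left]].
    case: (tot p.2 q.2) => [e2|[h|h]]; [|by right; left; right; split; [|right; split]|by right; right; right; split; [rewrite e|right; split; [rewrite e1|]]].
    by left; case: p q e e1 e2 => [? ?] [? ?] /= _ -> ->.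
  apply: (embed G hW w0 wo seg big wfR totR) => [[a b]].
  have [h hh] := seg1 G hW w0 seg (mx a b).
  have [pw hpw] := proj1 G W hW.
  have inseg q : R q (a, b) -> le q.1 (mx a b) /\ le q.2 (mx a b).
    move=> hq.
    have hm : le (mx q.1 q.2) (mx a b).
      by case: hq => [h1|[e _]]; rewrite /le; auto.
    split; [exact: le_trans (mx1 _ _) hm | exact: le_trans (mx2 _ _) hm].
  exists (fun q : {q | R q (a, b)} => pw (h (proj1_sig q).1, h (proj1_sig q).2)).
  move=> [q hq] [q' hq'] /= /hpw [].
  have [i1 i2] := inseg q hq; have [i1' i2'] := inseg q' hq'.
  move=> /hh e1 /hh e2; apply: sig_eq => /=.
  by case: q q' e1 e2 i1 i2 i1' i2' {hq hq'} => [? ?] [? ?] /= e1 e2 i1 i2 i1' i2'; rewrite (e1 i1 i1') (e2 i2 i2').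
- move=> U V [rU [woU [segU bigU]]] [rV [woV [segV bigV]]].
  apply: (embed G hW w0 woV segV bigV (proj2 (proj2 woU)) (proj1 (proj2 woU))) => x.
  case: (segU x) => U' [hU' hs]; apply: cle_trans hs _; exact: (proj1 (proj2 G) U' W hU' hW).
- move=> V hV _; exact: (good_nat G hW w0 hV).
Qed.

Lemma inh_succ k (T W : Type) : is_aleph k.+1 T -> is_aleph k W -> inhabited T.
Proof.
move=> [r [_ [_ big]]] hW; apply: NNPP => hn; apply: big; exists W; split => //.
by exists (fun t => False_rect W (hn (inhabits t))) => x; case: (hn (inhabits x)).
Qed.

Lemma good_all : forall k, (forall j, j < k -> exists W, is_aleph j W /\ inhabited W) -> Good k.
Proof.
elim=> [|k IH] hw; first exact: good0.
have [W [hW [w0]]] := hw k (ltnSn k).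
apply: (good_succ (IH _) hW w0) => j hj; apply: hw; exact: ltnW.
Qed.

Lemma cross k (G : Good k) (W : Type) (hW : is_aleph k W) (w0 : W) (V T : Type) :
  is_aleph k V -> is_aleph k.+1 T -> card_le V T.
Proof.
move=> hV hT; have hT' := hT; case: hT' => [r [wo [seg big]]].
case: k G hW w0 hV hT seg big => [|k] G hW w0 hV hT seg big.
- apply: cle_trans (proj1 (aleph0_inv hV)) _; exact: (good_nat G hW w0 hT).
- have hV' := hV; case: hV' => [rV [woV _]].
  apply: (embed G hW w0 wo seg big (proj2 (proj2 woV)) (proj1 (proj2 woV))) => x.
  apply: cle_trans (proj1 (proj2 G) V W hV hW).
  by exists (@proj1_sig _ _) => ? ?; apply: sig_eq.
Qed.

Lemma pigeon (X : Type) (l : list X) : forall g : nat -> X,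
  (forall i j, g i = g j -> i = j) -> (forall i, In (g i) l) -> False.
Proof.
elim: l => [|x l IH] g hg hl; first by case: (hl 0).
case: (classic (exists i0, g i0 = x)) => [[i0 hi0]|hn].
- pose g' i := g (if i < i0 then i else i.+1).
  apply: (IH g').
  + move=> i j /hg; rewrite /g'.
    case: (ltnP i i0); case: (ltnP j i0) => h1 h2 e; lia.
  + move=> i; case: (hl (if i < i0 then i else i.+1)) => // e.
    exfalso; have := hg _ _ (etrans (esym e) (esym hi0)).
    case: (ltnP i i0) => h e2; lia.
- apply: (IH g hg) => i; case: (hl i) => // e; case: hn; by exists i.
Qed.

Definition Box n (S : 'I_n -> Type) (A : forall i, S i -> Prop) (m : nat) (c : prodS S) :=
  {s : prodS S | (forall j : 'I_n, j < m -> A j (s j)) /\ (forall j : 'I_n, m <= j -> s j = c j)}.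

Definition HA n (S : 'I_n -> Type) (A : forall i, S i -> Prop) :=
  forall i : 'I_n, exists U : Type, is_aleph i U /\ exists e : U -> S i,
    (forall x y, e x = e y -> x = y) /\ (forall x, A i x <-> exists u, e u = x).

Lemma wit n (S : 'I_n -> Type) (A : forall i, S i -> Prop) (hA : HA A) :
  forall j, j < n -> exists W, is_aleph j W /\ inhabited W.
Proof.
have ex j (hj : j < n) : exists W, is_aleph j W.
  by case: (hA (Ordinal hj)) => U [hU _]; exists U.
case=> [|j] hj.
- case: (ex 0 hj) => W hW; exists W; split => //; exact: inhabits (aleph0_inh hW).
- case: (ex _ hj) => W hW; exists W; split => //.
  case: (ex j (ltnW hj)) => W' hW'; exact: inh_succ hW hW'.
Qed.

Lemma good_lt n (S : 'I_n -> Type) (A : forall i, S i -> Prop) (hA : HA A) :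
  forall j, j < n -> Good j.
Proof.
move=> j hj; apply: good_all => i hi; apply: (wit hA); exact: ltn_trans hi hj.
Qed.

Lemma prod_eq n (S : 'I_n -> Type) (s s' : prodS S) : (forall j, s j = s' j) -> s = s'.
Proof. move=> h; exact: functional_extensionality_dep h. Qed.

Lemma box_lemma n (S : 'I_n -> Type) (A : forall i, S i -> Prop) (hA : HA A) (c : prodS S) :
  forall m, m < n -> exists W, is_aleph m W /\ card_le (Box A m.+1 c) W.
Proof.
elim=> [|m IH] hm.
- pose om := Ordinal hm.
  case: (hA om) => U [hU [e [he hAe]]].
  exists U; split => //.
  have hin (s : Box A 1 c) : exists u, e u = proj1_sig s om.
    apply/hAe; exact: (proj1 (proj2_sig s) om isT).
  exists (fun s => proj1_sig (cid' (hin s))) => s s' E.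
  have E' : proj1_sig s om = proj1_sig s' om.
    by rewrite -(proj2_sig (cid' (hin s))) -(proj2_sig (cid' (hin s'))) E.
  apply: sig_eq; apply: prod_eq => j.
  case: (eqVneq j om) => [->//|ne].
  have hj : 1 <= j.
    by case: j ne => [[|j] hj] //= ne; case/eqP: ne; apply: val_inj.
  by rewrite (proj2 (proj2_sig s) j hj) (proj2 (proj2_sig s') j hj).
- have [W [hW hB]] := IH (ltnW hm).
  pose om := Ordinal hm.
  case: (hA om) => U [hU [e [he hAe]]].
  exists U; split => //.
  have hin (s : Box A m.+2 c) : exists u, e u = proj1_sig s om.
    apply/hAe; exact: (proj1 (proj2_sig s) om (ltnSn _)).
  have hreset (s : Box A m.+2 c) :
     (fun j => (forall j : 'I_n, j < m.+1 -> A j (dfwith (proj1_sig s) (c om) j)) /\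
               (forall j : 'I_n, m.+1 <= j -> dfwith (proj1_sig s) (c om) j = c j)) tt.
    split => j hj.
    + rewrite dfwith_out; last by apply/eqP => E; rewrite -E /= ltnn in hj.
      apply: (proj1 (proj2_sig s)); exact: ltnW.
    + case: (eqVneq om j) => [<-|ne]; first by rewrite dfwith_in.
      rewrite dfwith_out //; apply: (proj2 (proj2_sig s)).
      rewrite ltn_neqAle hj andbT; apply/eqP => E; case/eqP: ne; exact: val_inj.
  pose rs (s : Box A m.+2 c) : Box A m.+1 c := exist _ _ (hreset s).
  have hUU : card_le (Box A m.+1 c * U) U.
    apply: cle_trans (cle_prod hB (cle_refl U)) _.
    have Gm := good_lt hA (ltnW hm).
    have [W0 [hW0 [w0]]] := wit hA (ltnW hm).
    have hWU := cross Gm hW0 w0 hW hU.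
    apply: cle_trans (cle_prod hWU (cle_refl U)) _.
    exact: (proj1 (good_lt hA hm) U hU).
  apply: cle_trans _ hUU.
  exists (fun s => (rs s, proj1_sig (cid' (hin s)))) => s s' [] E1 E2.
  have E' : proj1_sig s om = proj1_sig s' om.
    by rewrite -(proj2_sig (cid' (hin s))) -(proj2_sig (cid' (hin s'))) E2.
  apply: sig_eq; apply: prod_eq => j.
  case: (eqVneq om j) => [<-//|ne].
  have := f_equal (fun z : prodS S => z j) E1.
  by rewrite /= !dfwith_out.
Qed.

Lemma claim n (S : 'I_n -> Type) (A : forall i, S i -> Prop) (hA : HA A)
  (R : pzRingType) (L : forall i, prodS_omit S i -> list (prodS S))
  m (hm : m < n) (c : prodS S) :
  exists t : S (Ordinal hm), A _ t /\ forall y : Box A m c,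
    ~ In t (List.map (fun z : prodS S => z (Ordinal hm))
                     (L (Ordinal hm) (@proj_omit _ _ (Ordinal hm) (proj1_sig y)))).
Proof.
apply: NNPP => H.
have H2 t : A (Ordinal hm) t -> exists y : Box A m c,
    In t (List.map (fun z : prodS S => z (Ordinal hm)) (L (Ordinal hm) (@proj_omit _ _ (Ordinal hm) (proj1_sig y)))).
  move=> ht; apply: NNPP => H3; apply: H; exists t; split => // y hy; apply: H3; by exists y.
case: (hA (Ordinal hm)) => U [hU [e [he hAe]]].
have H3 u := H2 _ ((hAe _).2 (ex_intro _ u erefl)).
case: m hm c H H2 hU e he hAe H3 => [|k] hm c H H2 hU e he hAe H3.
- have [f [hf _]] : is_aleph 0 U := hU.
  apply: (@pigeon _ (List.map (fun z : prodS S => z (Ordinal hm)) (L (Ordinal hm) (@proj_omit _ _ (Ordinal hm) c)))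
                   (fun i => e (f i))).
  + by move=> i j /he /hf.
  + move=> i; case: (H3 (f i)) => y.
    suff -> : proj1_sig y = c by [].
    apply: prod_eq => j; exact: (proj2 (proj2_sig y) j (leq0n _)).
- have [W [hW hB]] := box_lemma hA c (ltnW hm).
  have Gk := good_lt hA (ltnW hm).
  have [W0 [hW0 [w0]]] := wit hA (ltnW hm).
  have [g hg] := proj1 (proj2 Gk) W0 W hW0 hW.
  have hnW := proj2 (proj2 Gk) W hW (g w0).
  have hBW : card_le (Box A k.+1 c * nat) W.
    apply: cle_trans (cle_prod hB hnW) _; exact: (proj1 Gk W hW).
  have hU1 : is_aleph k.+1 U := hU.
  case: hU1 => [_ [_ [_ big]]]; apply: big; exists W; split => //.
  apply: cle_trans _ hBW.
  pose LL (y : Box A k.+1 c) := List.map (fun z : prodS S => z (Ordinal hm))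
           (L (Ordinal hm) (@proj_omit _ _ (Ordinal hm) (proj1_sig y))).
  have [yu hyu] : {yu : U -> Box A k.+1 c | forall u, In (e u) (LL (yu u))}.
    by exists (fun u => proj1_sig (cid' (H3 u))) => u; exact: (proj2_sig (cid' (H3 u))).
  have [iu hiu] : {iu : U -> nat | forall u, nth_error (LL (yu u)) (iu u) = Some (e u)}.
    by exists (fun u => proj1_sig (cid' (In_nth_error _ _ (hyu u)))) => u;
      exact: (proj2_sig (cid' (In_nth_error _ _ (hyu u)))).
  exists (fun u => (yu u, iu u)) => u u' [] E1 E2.
  apply: he.
  have h1 := hiu u; have h2 := hiu u'.
  rewrite -E2 -E1 h1 in h2; by case: h2.
Qed.

Lemma mainP n (S : 'I_n -> Type) (A : forall i, S i -> Prop) (hA : HA A)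
  (R : pzRingType) (v : forall i : 'I_n, prodS_omit S i -> (prodS S -> R))
  (L : forall i, prodS_omit S i -> list (prodS S))
  (hL : forall i x t, v i x t <> 0%R -> In t (L i x)) :
  forall m, m <= n -> forall c : prodS S, exists s : prodS S,
    (forall j : 'I_n, j < m -> A j (s j) /\ v j (@proj_omit _ _ j s) s = 0%R) /\
    (forall j : 'I_n, m <= j -> s j = c j).
Proof.
elim=> [|m IH] hm c.
  by exists c; split.
pose om := Ordinal hm.
have [t [ht hbad]] := claim hA R L hm c.
have [s [h1 h2]] := IH (ltnW hm) (dfwith c t).
have som : s om = t by rewrite (h2 om (leqnn _)) dfwith_in.
exists s; split => j hj; last first.
  rewrite h2; [|exact: ltnW]; rewrite dfwith_out //.
  by apply/eqP => E; rewrite -E /= ltnn in hj.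
case: (ltnP j m) => hjm; first exact: h1.
have -> : j = om by apply: val_inj => /=; apply/eqP; rewrite eqn_leq hjm -ltnS hj.
split; first by rewrite som.
apply: NNPP => hv.
have hin := hL _ _ _ hv.
have hy : (fun y => (forall j : 'I_n, j < m -> A j (y j)) /\ (forall j : 'I_n, m <= j -> y j = c j))
            (dfwith s (c om)).
  split => i hi.
  - rewrite dfwith_out; first exact: (proj1 (h1 i hi)).
    by apply/eqP => E; rewrite -E /= ltnn in hi.
  - case: (eqVneq om i) => [<-|ne]; first by rewrite dfwith_in.
    rewrite dfwith_out // h2 // dfwith_out //.
have Ep : @proj_omit _ _ om (dfwith s (c om)) = @proj_omit _ _ om s.
  apply: functional_extensionality_dep => [[i hi]].
  rewrite /proj_omit /= dfwith_out //; by rewrite eq_sym.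
apply: (hbad (exist _ _ hy)); rewrite /= Ep -som.
exact: (List.in_map (fun z : prodS S => z om)).
Qed.

Theorem mainTheorem4 (R : pzRingType) (n : nat) (S : 'I_n -> Type)
  (hS : forall i : 'I_n, ge_aleph (val i) (S i))
  (v : forall i : 'I_n, prodS_omit S i -> (prodS S -> R))
  (hv : forall (i : 'I_n) (x : prodS_omit S i), fin_supp (v i x)) :
  exists s : prodS S, forall i : 'I_n, v i (@proj_omit n S i s) s = 0%R.
Proof.
have hA0 : forall i : 'I_n, exists A : S i -> Prop, exists U : Type, is_aleph i U /\
    exists e : U -> S i, (forall x y, e x = e y -> x = y) /\ (forall x, A x <-> exists u, e u = x).
  move=> i; case: (hS i) => U [hU [e he]].
  by exists (fun x => exists u, e u = x), U; split => //; exists e; split.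
pose A i := proj1_sig (cid' (hA0 i)).
have hA : HA A := fun i => proj2_sig (cid' (hA0 i)).
pose L i x := proj1_sig (cid' (hv i x)).
have hL i x t : v i x t <> 0%R -> In t (L i x) := proj2_sig (cid' (hv i x)) t.
have hc : forall j : 'I_n, exists x : S j, True.
  move=> j; case: (hA j) => U [hU [e _]].
  have [W [hW [w0]]] := wit hA (ltn_ord j).
  have [g _] := proj1 (proj2 (good_lt hA (ltn_ord j))) W U hW hU.
  by exists (e (g w0)).
pose c : prodS S := fun j => proj1_sig (cid' (hc j)).
have [s [h1 _]] := @mainP n S A hA R v L hL n (leqnn n) c.
by exists s => i; exact: (proj2 (h1 i (ltn_ord i))).
Qed.
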